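(* Let $(M,d)$ be a compact ultrametric space and $n\in\mathbb{N}$. The optimal codes of size $n$ in $(M,d)$ are exactly the sets consisting of $n$ representatives of distinct parts of $\Pi(\delta)$, where $\delta=\max\{r:|\Pi(r)|\geq n\}$.
   Context: An ultrametric space satisfies $d(x,z)\leq\max(d(x,y),d(y,z))$ for all $x,y,z$. For $r>0$, $\Pi(r)$ denotes the partition of $M$ into open balls $B(x,r)=\{y:d(x,y)<r\}$ (any two such balls are equal or disjoint; in a compact space $\Pi(r)$ is finite). For finite $C\subseteq M$, $\delta(C)$ is the minimum distance between distinct points; an optimal code of size $n$ is an $n$-element subset maximizing $\delta$. *)

(* Defs.v *)
From Stdlib Require Import Reals List.
Import ListNotations.
Open Scope R_scope.

Section Ultra.
Context {M : Type} (d : M -> M -> R).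

Definition is_metric : Prop :=
  (forall x y, 0 <= d x y) /\
  (forall x y, d x y = 0 <-> x = y) /\
  (forall x y, d x y = d y x) /\
  (forall x y z, d x z <= d x y + d y z).

Definition is_ultrametric : Prop :=
  forall x y z, d x z <= Rmax (d x y) (d y z).

Definition ball (x : M) (r : R) : M -> Prop := fun y => d x y < r.

Definition is_open (U : M -> Prop) : Prop :=
  forall x, U x -> exists r, 0 < r /\ forall y, ball x r y -> U y.

Definition is_compact : Prop :=
  forall (I : Type) (U : I -> M -> Prop),
    (forall i, is_open (U i)) -> (forall x, exists i, U i x) ->
    exists l : list I, forall x, exists i, In i l /\ U i x.

(* B is a part of Pi(r), i.e. an open ball of radius r *)
Definition is_part (r : R) (B : M -> Prop) : Prop := exists x, B = ball x r.

Definition Pi_card_ge (r : R) (n : nat) : Prop :=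
  exists Bs : list (M -> Prop), length Bs = n /\ NoDup Bs /\ Forall (is_part r) Bs.

Definition is_min_dist (C : list M) (m : R) : Prop :=
  (exists x y, In x C /\ In y C /\ x <> y /\ d x y = m) /\
  (forall x y, In x C -> In y C -> x <> y -> m <= d x y).

Definition is_code (n : nat) (C : list M) : Prop := NoDup C /\ length C = n.

Definition is_optimal_code (n : nat) (C : list M) : Prop :=
  is_code n C /\
  forall C' m m', is_code n C' -> is_min_dist C m -> is_min_dist C' m' -> m' <= m.

Definition is_max_radius (n : nat) (delta : R) : Prop :=
  0 < delta /\ Pi_card_ge delta n /\
  forall r, 0 < r -> Pi_card_ge r n -> r <= delta.

Definition is_transversal_code (n : nat) (delta : R) (C : list M) : Prop :=
  is_code n C /\
  forall x y, In x C -> In y C -> x <> y -> ball x delta <> ball y delta.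

End Ultra.

(* Main.v *)
Require Import Defs.
From Stdlib Require Import Reals List.
From Stdlib Require Import Lra Lia Classical FunctionalExtensionality PropExtensionality.
Open Scope R_scope.

Lemma list_max (P : R -> Prop) (L : list R) :
  (exists f, In f L /\ P f) -> exists f, In f L /\ P f /\ forall g, In g L -> P g -> g <= f.
Proof.
  induction L as [|a L IH]; intros [f [Hf Pf]].
  - destruct Hf.
  - destruct (classic (exists f, In f L /\ P f)) as [Hex|Hno].
    + destruct (IH Hex) as [m [Hm [Pm Hmax]]].
      destruct (classic (P a)) as [Pa|nPa].
      * destruct (Rle_dec a m).
        -- exists m. split; [right; exact Hm|split; [exact Pm|]].
           intros g [<-|Hg] Pg; [lra|apply Hmax; auto].
        -- exists a. split; [left; reflexivity|split; [exact Pa|]].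
           intros g [<-|Hg] Pg; [lra|]. specialize (Hmax g Hg Pg); lra.
      * exists m. split; [right; exact Hm|split; [exact Pm|]].
        intros g [<-|Hg] Pg; [contradiction|apply Hmax; auto].
    + exists a. destruct Hf as [<-|Hf]; [|exfalso; apply Hno; eauto].
      split; [left; reflexivity|split; [exact Pf|]].
      intros g [<-|Hg] Pg; [lra|exfalso; apply Hno; eauto].
Qed.

Lemma list_min (P : R -> Prop) (L : list R) :
  (exists f, In f L /\ P f) -> exists f, In f L /\ P f /\ forall g, In g L -> P g -> f <= g.
Proof.
  induction L as [|a L IH]; intros [f [Hf Pf]].
  - destruct Hf.
  - destruct (classic (exists f, In f L /\ P f)) as [Hex|Hno].
    + destruct (IH Hex) as [m [Hm [Pm Hmax]]].
      destruct (classic (P a)) as [Pa|nPa].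
      * destruct (Rle_dec m a).
        -- exists m. split; [right; exact Hm|split; [exact Pm|]].
           intros g [<-|Hg] Pg; [lra|apply Hmax; auto].
        -- exists a. split; [left; reflexivity|split; [exact Pa|]].
           intros g [<-|Hg] Pg; [lra|]. specialize (Hmax g Hg Pg); lra.
      * exists m. split; [right; exact Hm|split; [exact Pm|]].
        intros g [<-|Hg] Pg; [contradiction|apply Hmax; auto].
    + exists a. destruct Hf as [<-|Hf]; [|exfalso; apply Hno; eauto].
      split; [left; reflexivity|split; [exact Pf|]].
      intros g [<-|Hg] Pg; [lra|exfalso; apply Hno; eauto].
Qed.

Definition pw {M : Type} (d : M -> M -> R) (r : R) (C : list M) : Prop :=
  forall x y, In x C -> In y C -> x <> y -> r <= d x y.

Lemma pos_iff {M : Type} (d : M -> M -> R) (Hmet : is_metric d) x y :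
  0 < d x y <-> x <> y.
Proof.
  destruct Hmet as [Hpos [Hzero [Hsym Htri]]].
  split.
  - intros H E. subst. assert (d y y = 0) by (apply Hzero; reflexivity). lra.
  - intros H. destruct (Hpos x y) as [Hl|He]; auto.
    exfalso; apply H; apply Hzero; auto.
Qed.

Lemma ball_eq {M : Type} (d : M -> M -> R) (Hmet : is_metric d)
  (Hultra : is_ultrametric d) x y r : d x y < r -> ball d x r = ball d y r.
Proof.
  destruct Hmet as [Hpos [Hzero [Hsym Htri]]].
  intros H. apply functional_extensionality; intro z.
  apply propositional_extensionality. unfold ball. split; intro Hz.
  - pose proof (Hultra y x z). rewrite (Hsym y x) in H0.
    pose proof (Rmax_lub_lt _ _ _ H Hz). lra.
  - pose proof (Hultra x y z).
    pose proof (Rmax_lub_lt _ _ _ H Hz). lra.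
Qed.

Lemma ball_neq_iff {M : Type} (d : M -> M -> R) (Hmet : is_metric d)
  (Hultra : is_ultrametric d) x y r : 0 < r ->
  (ball d x r <> ball d y r <-> r <= d x y).
Proof.
  intros Hr. split.
  - intros H. destruct (Rle_dec r (d x y)); auto.
    exfalso; apply H; apply ball_eq; auto; lra.
  - intros H E.
    assert (Hy : ball d y r y).
    { unfold ball. destruct Hmet as [_ [Hzero _]].
      assert (d y y = 0) by (apply Hzero; reflexivity). lra. }
    rewrite <- E in Hy. unfold ball in Hy. lra.
Qed.

Lemma nodup_map_neq {A B : Type} (f : A -> B) (l : list A) :
  NoDup (map f l) -> forall x y, In x l -> In y l -> x <> y -> f x <> f y.
Proof.
  induction l as [|a l IH]; simpl; intros Hnd x y Hx Hy Hxy; [destruct Hx|].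
  inversion Hnd as [|? ? Hni Hnd']; subst.
  destruct Hx as [<-|Hx]; destruct Hy as [<-|Hy].
  - contradiction.
  - intros E. apply Hni. rewrite E. apply in_map; auto.
  - intros E. apply Hni. rewrite <- E. apply in_map; auto.
  - apply IH; auto.
Qed.

Lemma centers {M : Type} (d : M -> M -> R) r (Bs : list (M -> Prop)) :
  Forall (is_part d r) Bs -> exists cs, map (fun x => ball d x r) cs = Bs.
Proof.
  induction 1 as [|B Bs [x Hx] _ [cs Hcs]].
  - exists nil; reflexivity.
  - exists (x :: cs). simpl. rewrite Hcs, Hx. reflexivity.
Qed.

Lemma pi_iff {M : Type} (d : M -> M -> R) (Hmet : is_metric d)
  (Hultra : is_ultrametric d) r n : 0 < r ->
  (Pi_card_ge d r n <-> exists C, is_code n C /\ pw d r C).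
Proof.
  intros Hr. split.
  - intros [Bs [Hlen [Hnd Hall]]].
    destruct (centers d r Bs Hall) as [cs Hcs]. subst Bs.
    exists cs. split; [split|].
    + eapply NoDup_map_inv; eauto.
    + rewrite length_map in Hlen; auto.
    + intros x y Hx Hy Hxy.
      apply (ball_neq_iff d Hmet Hultra x y r Hr).
      apply (nodup_map_neq (fun x => ball d x r) cs Hnd x y Hx Hy Hxy).
  - intros [C [[Hnd Hlen] Hpw]].
    exists (map (fun x => ball d x r) C). split; [|split].
    + rewrite length_map; auto.
    + apply NoDup_map_NoDup_ForallPairs; auto.
      intros a b Ha Hb E. apply NNPP. intros Hab.
      exact ((proj2 (ball_neq_iff d Hmet Hultra a b r Hr)) (Hpw a b Ha Hb Hab) E).
    + apply Forall_forall. intros B HB. apply in_map_iff in HB.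
      destruct HB as [x [<- _]]. exists x; reflexivity.
Qed.

Lemma mindist_exists {M : Type} (d : M -> M -> R) (Hmet : is_metric d) (C : list M) :
  (exists x y, In x C /\ In y C /\ x <> y) -> exists m, is_min_dist d C m.
Proof.
  intros [a [b [Ha [Hb Hab]]]].
  destruct (list_min (fun g => 0 < g) (map (fun p => d (fst p) (snd p)) (list_prod C C)))
    as [m [Hm [Pm Hmin]]].
  { exists (d a b). split.
    - apply in_map_iff. exists (a, b). split; auto. apply in_prod_iff; auto.
    - apply pos_iff; auto. }
  exists m. apply in_map_iff in Hm. destruct Hm as [[x y] [Hxy Hin]].
  apply in_prod_iff in Hin. simpl in Hxy. split.
  - exists x, y. destruct Hin. split; auto. split; auto. split; auto.
    apply (pos_iff d Hmet). lra.
  - intros u v Hu Hv Huv. apply Hmin.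
    + apply in_map_iff. exists (u, v). split; auto. apply in_prod_iff; auto.
    + apply pos_iff; auto.
Qed.

Lemma mindist_pw {M : Type} (d : M -> M -> R) C m :
  is_min_dist d C m -> pw d m C.
Proof. intros [_ H]. exact H. Qed.

Lemma iso {M : Type} (d : M -> M -> R) (Hmet : is_metric d)
  (Hultra : is_ultrametric d) a b c : d a b < d b c -> d a c = d b c.
Proof.
  destruct Hmet as [Hpos [Hzero [Hsym Htri]]].
  intros H. pose proof (Hultra a b c). pose proof (Hultra b a c).
  rewrite (Hsym b a) in H1.
  unfold Rmax in *. destruct (Rle_dec (d a b) (d b c)); destruct (Rle_dec (d a b) (d a c)); lra.
Qed.

Theorem lemma4p17 (M : Type) (d : M -> M -> R) (n : nat)
  (Hmet : is_metric d) (Hultra : is_ultrametric d) (Hcomp : is_compact d)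
  (Hn : (2 <= n)%nat)
  (HM : exists C : list M, NoDup C /\ length C = n) :
  exists delta : R, is_max_radius d n delta /\
    forall C : list M, is_optimal_code d n C <-> is_transversal_code d n delta C.
Proof.
  assert (Hpair : forall C : list M, is_code n C -> exists x y, In x C /\ In y C /\ x <> y).
  { intros C [Hnd Hlen]. destruct C as [|a [|b C]]; simpl in Hlen; try lia.
    exists a, b. split; [left; auto|split; [right; left; auto|]].
    inversion Hnd; subst. intros E; subst. apply H1; left; auto. }
  assert (Hmd : forall C : list M, is_code n C -> exists m, is_min_dist d C m).
  { intros C HC. apply mindist_exists; auto. }
  assert (Hmpos : forall (C : list M) m, is_min_dist d C m -> 0 < m).
  { intros C m [[x [y [_ [_ [Hxy <-]]]]] _]. apply pos_iff; auto. }
  destruct HM as [C0 HC0].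
  destruct (Hmd C0 HC0) as [r0 Hr0].
  pose proof (Hmpos _ _ Hr0) as Hr0pos.
  destruct Hmet as [Hpos [Hzero [Hsym Htri]]] eqn:Hmet'.
  destruct (Hcomp M (fun x => ball d x r0)) as [l Hl].
  { intros x y Hy. exists (r0 - d x y). unfold ball in *. split; [lra|].
    intros z Hz. pose proof (Htri x y z). lra. }
  { intros x. exists x. unfold ball. rewrite (proj2 (Hzero x x) eq_refl). lra. }
  set (F := map (fun p => d (fst p) (snd p)) (list_prod l l)).
  assert (HF : forall y z, r0 <= d y z -> In (d y z) F).
  { intros y z Hyz.
    destruct (Hl y) as [xi [Hxi Hyi]]. destruct (Hl z) as [xj [Hxj Hzj]].
    unfold ball in Hyi, Hzj.
    assert (E1 : d xi z = d y z) by (apply (iso d Hmet Hultra); lra).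
    assert (E2 : d xj xi = d z xi).
    { apply (iso d Hmet Hultra). rewrite (Hsym z xi). lra. }
    apply in_map_iff. exists (xi, xj). split.
    - simpl. rewrite Hsym, E2, Hsym. auto.
    - apply in_prod_iff; auto. }
  destruct (list_max (fun f => r0 <= f /\ exists C, is_code n C /\ pw d f C) F)
    as [delta [_ [[Hr0d [Cd [HCd Hpwd]]] Hmax]]].
  { destruct Hr0 as [[a [b [Ha [Hb [Hab E]]]]] Hlow].
    exists r0. split; [rewrite <- E; apply HF; lra|]. split; [lra|].
    exists C0. split; auto. }
  assert (Hdpos : 0 < delta) by lra.
  assert (Hupper : forall r, 0 < r -> Pi_card_ge d r n -> r <= delta).
  { intros r Hr Hpi. apply (pi_iff d Hmet Hultra r n Hr) in Hpi.
    destruct Hpi as [C [HC Hpw]].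
    destruct (Rle_dec r r0); [lra|].
    destruct (Hmd C HC) as [m Hm].
    assert (r <= m).
    { destruct Hm as [[x [y [Hx [Hy [Hxy <-]]]]] _]. apply Hpw; auto. }
    assert (m <= delta).
    { apply Hmax.
      - destruct Hm as [[x [y [Hx [Hy [Hxy <-]]]]] _]. apply HF; lra.
      - split; [lra|]. exists C. split; auto. apply mindist_pw; auto. }
    lra. }
  exists delta. split.
  - split; [auto|split; auto].
    apply (pi_iff d Hmet Hultra delta n Hdpos). exists Cd; auto.
  - intros C. split.
    + intros [HC Hopt]. split; auto.
      destruct (Hmd C HC) as [m Hm].
      destruct (Hmd Cd HCd) as [m' Hm'].
      assert (delta <= m').
      { destruct Hm' as [[x [y [Hx [Hy [Hxy <-]]]]] _]. apply Hpwd; auto. }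
      pose proof (Hopt Cd m m' HCd Hm Hm').
      intros x y Hx Hy Hxy.
      apply (ball_neq_iff d Hmet Hultra x y delta Hdpos).
      destruct Hm as [_ Hlow]. specialize (Hlow x y Hx Hy Hxy). lra.
    + intros [HC Htr]. split; auto.
      intros C' m m' HC' Hm Hm'.
      assert (delta <= m).
      { destruct Hm as [[x [y [Hx [Hy [Hxy <-]]]]] _].
        apply (ball_neq_iff d Hmet Hultra x y delta Hdpos). apply Htr; auto. }
      assert (m' <= delta).
      { apply Hupper; [eapply Hmpos; eauto|].
        apply (pi_iff d Hmet Hultra m' n (Hmpos _ _ Hm')).
        exists C'. split; auto. apply mindist_pw; auto. }
      lra.
Qed.
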